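(* Let $n>0$ be an integer and $\alpha$ a dipath on $\vec{|\square[n]|}$ (whose underlying space is $\mathbb{I}^n$). For $x\in\mathbb{I}^n$ let $v(x)\in\{0,1\}^n$ be the vertex with coordinates $v(x)_i=1$ if $x_i=1$ and $v(x)_i=0$ otherwise (equivalently $v(x)=\mathrm{supp}(x)_*(0,\ldots,0)$). Then there is a dipath $\beta$ on $\vec{|\square[n]|}$ from $v(\alpha(0))$ to $v(\alpha(1))$ such that $U(\beta)$ is cellular (it maps $\{0,1\}$ to vertices and $[0,1]$ into the union of the edges of the cube). Moreover, if $\alpha(0)$ and $\alpha(1)$ lie in the boundary $\partial\mathbb{I}^n$ (points having some coordinate equal to $0$ or $1$) and $\alpha(\tfrac12)$ lies in the interior $(0,1)^n$, then $\beta$ is non-constant.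
   Context: Streams: a circulation on a space $X$ assigns to each open $V\subset X$ a preorder $\leqslant_V$ such that for every collection $\mathcal{O}$ of open sets, $\leqslant_{\bigcup\mathcal{O}}$ is the preorder with smallest graph containing $\bigcup_{V\in\mathcal{O}}\mathrm{graph}(\leqslant_V)$; a stream is a space with a circulation; a stream map $f:X\to Y$ is continuous with $f(x)\leqslant_V f(y)$ whenever $x\leqslant_{f^{-1}V}y$; $U$ is the forgetful functor to spaces. $\vec\square[1]$ is $[0,1]$ with circulation $x\leqslant_V y$ iff $x\le y$ and $[x,y]\subset V$; a dipath is a stream map from $\vec\square[1]$. $\square[n]=\square(-,[1]^n)$ is the representable precubical set, where $\square$ is the smallest subcategory of posets and monotone maps closed under cartesian products containing $\delta_\pm:\{0\}\to\{0<1\}$. Its stream realization $\vec{|\square[n]|}$ is the stream $\vec\square[n]$, the $n$-fold product of $\vec\square[1]$ in streams, with underlying space $\mathbb{I}^n$ (CW structure: the standard cubical cells) and $\leqslant_{\mathbb{I}^n}$ the coordinatewise order. $[0,1]$ has CW structure with vertices $0,1$. *)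

(* Defs.v *)
From Stdlib Require Import Reals.
Open Scope R_scope.

Definition inI (x : R) : Prop := 0 <= x <= 1.

Definition openI (V : R -> Prop) : Prop :=
  (forall x, V x -> inI x) /\
  (forall x, V x -> exists eps, 0 < eps /\
      forall y, inI y -> Rabs (y - x) < eps -> V y).

(* Circulation of the stream vec-square[1]:
   x <=_V y  iff  x <= y and [x,y] is contained in V. *)
Definition circ1 (V : R -> Prop) (x y : R) : Prop :=
  x <= y /\ (forall z, x <= z <= y -> V z).

Definition continuousI (f : R -> R) : Prop :=
  forall x, inI x -> forall eps, 0 < eps -> exists delta, 0 < delta /\
    forall y, inI y -> Rabs (y - x) < delta -> Rabs (f y - f x) < eps.

Definition stream_map_I (f : R -> R) : Prop :=
  (forall t, inI t -> inI (f t)) /\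
  continuousI f /\
  (forall V, openI V -> forall x y, inI x -> inI y ->
      circ1 (fun t => inI t /\ V (f t)) x y -> circ1 V (f x) (f y)).

(* A point of I^n is represented by its coordinate function (coordinates
   i < n are relevant); a map [0,1] -> I^n by  alpha : nat -> R -> R,
   alpha i t = i-th coordinate of alpha(t).
   vec-square[n] is the n-fold product of vec-square[1] in streams, so by the
   universal property of the product a stream map vec-square[1] -> vec-square[n]
   (a dipath) is exactly an n-tuple of stream maps vec-square[1] -> vec-square[1]. *)
Definition dipath (n : nat) (alpha : nat -> R -> R) : Prop :=
  forall i, (i < n)%nat -> stream_map_I (alpha i).

Definition vtx (x : nat -> R) : nat -> R :=
  fun i => if Req_EM_T (x i) 1 then 1 else 0.

Definition is_vertex (n : nat) (x : nat -> R) : Prop :=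
  forall i, (i < n)%nat -> x i = 0 \/ x i = 1.

Definition in_edges (n : nat) (x : nat -> R) : Prop :=
  exists j, forall i, (i < n)%nat -> i <> j -> x i = 0 \/ x i = 1.

Definition cellular (n : nat) (beta : nat -> R -> R) : Prop :=
  is_vertex n (fun i => beta i 0) /\ is_vertex n (fun i => beta i 1) /\
  (forall t, inI t -> in_edges n (fun i => beta i t)).

Definition in_boundary (n : nat) (x : nat -> R) : Prop :=
  exists i, (i < n)%nat /\ (x i = 0 \/ x i = 1).

Definition in_interior (n : nat) (x : nat -> R) : Prop :=
  forall i, (i < n)%nat -> 0 < x i < 1.

Definition nonconstant (n : nat) (beta : nat -> R -> R) : Prop :=
  exists t, inI t /\ exists i, (i < n)%nat /\ beta i t <> beta i 0.

(* Main.v *)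
Require Import Defs.
From Stdlib Require Import Reals Lra Lia Classical.
Open Scope R_scope.

Definition clamp (a : R) : R := Rmin 1 (Rmax 0 a).

Lemma clamp_lip a b : Rabs (clamp a - clamp b) <= Rabs (a - b).
Proof. unfold clamp, Rmin, Rmax.
  repeat destruct Rle_dec; split_Rabs; lra. Qed.

Lemma clamp_mono a b : a <= b -> clamp a <= clamp b.
Proof. unfold clamp, Rmin, Rmax. intros. repeat destruct Rle_dec; lra. Qed.

Lemma clamp_I a : inI (clamp a).
Proof. unfold inI, clamp, Rmin, Rmax. repeat destruct Rle_dec; lra. Qed.

Lemma clamp_0 a : a <= 0 -> clamp a = 0.
Proof. unfold clamp, Rmin, Rmax. intros. repeat destruct Rle_dec; lra. Qed.

Lemma clamp_1 a : 1 <= a -> clamp a = 1.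
Proof. unfold clamp, Rmin, Rmax. intros. repeat destruct Rle_dec; lra. Qed.

Lemma clamp_mid a : clamp a <> 0 -> clamp a <> 1 -> 0 < a < 1.
Proof. unfold clamp, Rmin, Rmax. intros. repeat destruct Rle_dec; lra. Qed.

Lemma lip_cont f K : 0 < K -> (forall x y, Rabs (f x - f y) <= K * Rabs (x - y)) ->
  continuity f.
Proof.
  intros HK H x. unfold continuity_pt, continue_in, limit1_in, limit_in.
  intros eps He. exists (eps / K). split.
  - apply Rdiv_lt_0_compat; lra.
  - intros y [_ Hy]. simpl in *. unfold R_dist in *.
    specialize (H y x).
    assert (K * Rabs (y - x) < K * (eps / K)) by (apply Rmult_lt_compat_l; lra).
    replace (K * (eps / K)) with eps in H0 by (field; lra). lra.
Qed.

Lemma stream_of f K : 0 < K -> (forall x y, Rabs (f x - f y) <= K * Rabs (x - y)) ->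
  (forall t, inI t -> inI (f t)) -> (forall x y, x <= y -> f x <= f y) ->
  stream_map_I f.
Proof.
  intros HK Hl HI Hm. split; [exact HI|split].
  - intros x _ eps He. exists (eps / K). split.
    + apply Rdiv_lt_0_compat; lra.
    + intros y _ Hy. specialize (Hl y x).
      assert (K * Rabs (y - x) < K * (eps / K)) by (apply Rmult_lt_compat_l; lra).
      replace (K * (eps / K)) with eps in H by (field; lra). lra.
  - intros V _ x y Hx Hy [Hxy Hz]. split; [apply Hm; exact Hxy|].
    intros w Hw.
    destruct (IVT_cor (fun t => f t - w) x y) as [z [Hz1 Hz2]].
    + apply lip_cont with K; auto. intros a b.
      replace (f a - w - (f b - w)) with (f a - f b) by ring. auto.
    + exact Hxy.
    + assert (f x - w <= 0) by lra. assert (0 <= f y - w) by lra.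
      replace 0 with (0 * 0) at 2 by ring. nra.
    + replace w with (f z) by lra. apply Hz; exact Hz1.
Qed.

Lemma stream_mono f x y : stream_map_I f -> inI x -> inI y -> x <= y -> f x <= f y.
Proof.
  intros [HI [_ Hc]] Hx Hy Hxy.
  assert (Ho : openI inI).
  { split; auto. intros z _. exists 1. split; [lra|auto]. }
  destruct (Hc inI Ho x y Hx Hy) as [H _]; auto.
  split; auto. intros z Hz. unfold inI in *. split; [lra|]. apply HI. unfold inI; lra.
Qed.

Definition betaf (n : nat) (alpha : nat -> R -> R) (i : nat) (t : R) : R :=
  if Req_EM_T (alpha i 0) 1 then 1
  else if Req_EM_T (alpha i 1) 1 then clamp (INR n * t - INR i) else 0.

Lemma const_stream c : inI c -> stream_map_I (fun _ => c).
Proof.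
  intros Hc. apply stream_of with 1; auto; intros; try lra.
  replace (c - c) with 0 by ring. rewrite Rabs_R0. pose proof (Rabs_pos (x - y)). lra.
Qed.

Theorem mainTheorem7 (n : nat) (hn : (0 < n)%nat) (alpha : nat -> R -> R)
  (halpha : dipath n alpha) :
  exists beta : nat -> R -> R,
    dipath n beta /\
    (forall i, (i < n)%nat ->
       beta i 0 = vtx (fun j => alpha j 0) i /\
       beta i 1 = vtx (fun j => alpha j 1) i) /\
    cellular n beta /\
    (in_boundary n (fun j => alpha j 0) ->
     in_boundary n (fun j => alpha j 1) ->
     in_interior n (fun j => alpha j (1/2)) ->
     nonconstant n beta).
Proof.
  assert (Hn : 0 < INR n) by (apply lt_0_INR; lia).
  assert (I0 : inI 0) by (unfold inI; lra).
  assert (I1 : inI 1) by (unfold inI; lra).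
  assert (Ih : inI (1/2)) by (unfold inI; lra).
  assert (Hends : forall i, (i < n)%nat ->
       betaf n alpha i 0 = vtx (fun j => alpha j 0) i /\
       betaf n alpha i 1 = vtx (fun j => alpha j 1) i).
  { intros i Hi. unfold betaf, vtx.
    assert (Hin : INR i < INR n) by (apply lt_INR; lia).
    assert (Hin' : INR i + 1 <= INR n).
    { rewrite <- S_INR. apply le_INR. lia. }
    assert (HI : inI (alpha i 1)) by (apply (halpha i Hi); exact I1).
    pose proof (stream_mono (alpha i) 0 1 (halpha i Hi) I0 I1 ltac:(lra)) as Hm.
    destruct (Req_EM_T (alpha i 0) 1) as [E|E].
    - destruct (Req_EM_T (alpha i 1) 1) as [E'|E']; [split; auto|].
      unfold inI in HI. exfalso; lra.
    - destruct (Req_EM_T (alpha i 1) 1) as [E'|E']; split; auto.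
      + apply clamp_0. pose proof (pos_INR i). lra.
      + apply clamp_1. lra. }
  exists (betaf n alpha). split; [|split; [exact Hends|split]].
  - intros i Hi. unfold betaf.
    destruct (Req_EM_T (alpha i 0) 1); [apply const_stream; exact I1|].
    destruct (Req_EM_T (alpha i 1) 1); [|apply const_stream; exact I0].
    apply stream_of with (INR n); auto.
    + intros x y. eapply Rle_trans; [apply clamp_lip|].
      replace (INR n * x - INR i - (INR n * y - INR i)) with (INR n * (x - y)) by ring.
      rewrite Rabs_mult, (Rabs_pos_eq (INR n)); lra.
    + intros. apply clamp_I.
    + intros. apply clamp_mono. nra.
  - split; [|split].
    + intros i Hi. destruct (Hends i Hi) as [-> _]. unfold vtx.
      destruct Req_EM_T; auto.
    + intros i Hi. destruct (Hends i Hi) as [_ ->]. unfold vtx.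
      destruct Req_EM_T; auto.
    + intros t _.
      assert (Hc : forall i, betaf n alpha i t = 0 \/ betaf n alpha i t = 1 \/
                 0 < INR n * t - INR i < 1).
      { intros i. unfold betaf.
        destruct (Req_EM_T (alpha i 0) 1); auto.
        destruct (Req_EM_T (alpha i 1) 1); auto.
        destruct (Req_EM_T (clamp (INR n * t - INR i)) 0); auto.
        destruct (Req_EM_T (clamp (INR n * t - INR i)) 1); auto.
        right; right. apply clamp_mid; auto. }
      destruct (classic (exists j, ~ (betaf n alpha j t = 0 \/ betaf n alpha j t = 1)))
        as [[j Hj]|Hno].
      * exists j. intros i _ Hij.
        destruct (classic (betaf n alpha i t = 0 \/ betaf n alpha i t = 1)) as [?|Hi]; auto.
        exfalso.
        destruct (Hc i) as [?|[?|Hi']]; [tauto|tauto|].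
        destruct (Hc j) as [?|[?|Hj']]; [tauto|tauto|].
        destruct (Nat.lt_total i j) as [L|[L|L]].
        -- assert (INR i + 1 <= INR j) by (rewrite <- S_INR; apply le_INR; lia). lra.
        -- lia.
        -- assert (INR j + 1 <= INR i) by (rewrite <- S_INR; apply le_INR; lia). lra.
      * exists O. intros i _ _.
        destruct (classic (betaf n alpha i t = 0 \/ betaf n alpha i t = 1)); auto.
        exfalso; apply Hno; exists i; auto.
  - intros _ [j [Hj Hb]] Hint.
    pose proof (Hint j Hj) as Hh.
    pose proof (stream_mono (alpha j) 0 (1/2) (halpha j Hj) I0 Ih ltac:(lra)).
    pose proof (stream_mono (alpha j) (1/2) 1 (halpha j Hj) Ih I1 ltac:(lra)).
    simpl in *.
    assert (A1 : alpha j 1 = 1) by lra.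
    exists 1. split; auto. exists j. split; auto.
    unfold betaf.
    destruct (Req_EM_T (alpha j 0) 1); [lra|].
    destruct (Req_EM_T (alpha j 1) 1); [|lra].
    rewrite clamp_1, clamp_0.
    + lra.
    + pose proof (pos_INR j). lra.
    + assert (INR j + 1 <= INR n) by (rewrite <- S_INR; apply le_INR; lia). lra.
Qed.
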